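(* Let $m \ge 1$ and $n \ge 2m+2$ be integers. Then for every real $r$ with $|r|<1$, $$\int_{-1}^1 \frac{T_n(s)(1-s^2)^{m-\frac{1}{2}}}{(s-r)^3}\,ds = (-1)^{m+1}\left(\frac{1}{2}\right)^{2m+1}\frac{\pi}{1-r^2}\sum_{j=0}^{2m-1}(-1)^j\binom{2m-1}{j}(n+1-2m+2j)\Big[(n+2-2m+2j)U_{n-1-2m+2j}(r)-(n-2m+2j)U_{n+1-2m+2j}(r)\Big],$$ where the integral is a Hadamard finite-part integral.
   Context: $T_k(s)=\cos(k\cos^{-1}s)$ and $U_k(s)=\frac{\sin((k+1)\cos^{-1}s)}{\sin(\cos^{-1}s)}$ are the Tchebyshev polynomials of the first and second kinds. For a positive integer $\alpha\ge 2$ and $|r|<1$, the integral $\int_{-1}^1 \frac{D(s)}{(s-r)^\alpha}ds$ is understood in the Hadamard finite-part sense; in particular it satisfies $\int_{-1}^1 \frac{D(s)}{(s-r)^{\alpha}}ds=\frac{1}{\alpha-1}\frac{d}{dr}\int_{-1}^1\frac{D(s)}{(s-r)^{\alpha-1}}ds$, where for $\alpha-1=1$ the right-hand integral is a Cauchy principal value. $\binom{a}{j}=\frac{a!}{j!(a-j)!}$. *)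

(* Defs.v *)
From Stdlib Require Import Reals.
From Coquelicot Require Import Coquelicot.
Open Scope R_scope.

Definition chebT (k : nat) (s : R) : R := cos (INR k * acos s).
Definition chebU (k : nat) (s : R) : R := sin (INR (k + 1) * acos s) / sin (acos s).

Definition is_PV (D : R -> R) (r v : R) : Prop :=
  filterlim
    (fun eps => RInt (fun s => D s / (s - r)) (-1) (r - eps)
              + RInt (fun s => D s / (s - r)) (r + eps) 1)
    (at_right 0) (locally v).

(* is_FP D k r v : the Hadamard finite-part integral
   int_{-1}^1 D(s)/(s-r)^(k+1) ds exists and equals v, defined by
   order 1 = principal value, and
   FP int D/(s-r)^(a) = 1/(a-1) d/dr FP int D/(s-r)^(a-1). *)
Fixpoint is_FP (D : R -> R) (k : nat) (r v : R) : Prop :=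
  match k with
  | O => is_PV D r v
  | S k' => exists g : R -> R,
      (forall x, -1 < x < 1 -> is_FP D k' x (g x)) /\
      is_derive g r (INR (S k') * v)
  end.

(* Main.v *)
Require Import Defs.
From Stdlib Require Import Reals Lra Lia.
From Coquelicot Require Import Coquelicot.
Open Scope R_scope.

Lemma cR_const (c x : R) : continuous (fun _ : R => c) x.
Proof. apply (continuous_const (U:=R_UniformSpace) (V:=R_UniformSpace)). Qed.
Lemma cR_id (x : R) : continuous (fun z : R => z) x.
Proof. apply (continuous_id (U:=R_UniformSpace)). Qed.
Lemma cR_plus (f g : R -> R) x : continuous f x -> continuous g x -> continuous (fun z => f z + g z) x.
Proof. intros Hf Hg. apply (continuous_plus (U:=R_UniformSpace) (K:=R_AbsRing) (V:=R_NormedModule) f g x Hf Hg). Qed.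
Lemma cR_opp (f : R -> R) x : continuous f x -> continuous (fun z => - f z) x.
Proof. intros Hf. apply (continuous_opp (U:=R_UniformSpace) (K:=R_AbsRing) (V:=R_NormedModule) f x Hf). Qed.
Lemma cR_minus (f g : R -> R) x : continuous f x -> continuous g x -> continuous (fun z => f z - g z) x.
Proof. intros Hf Hg. apply cR_plus; [exact Hf| apply cR_opp; exact Hg]. Qed.
Lemma cR_mult (f g : R -> R) x : continuous f x -> continuous g x -> continuous (fun z => f z * g z) x.
Proof. intros Hf Hg. apply (continuous_mult (U:=R_UniformSpace) (K:=R_AbsRing) f g x Hf Hg). Qed.
Lemma cR_inv (f : R -> R) x : continuous f x -> f x <> 0 -> continuous (fun z => / f z) x.
Proof. intros Hf H. apply continuous_Rinv_comp; auto. Qed.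
Lemma cR_div (f g : R -> R) x : continuous f x -> continuous g x -> g x <> 0 -> continuous (fun z => f z / g z) x.
Proof. intros Hf Hg H. unfold Rdiv. apply cR_mult; auto. apply cR_inv; auto. Qed.
Lemma cR_comp (f g : R -> R) x : continuous f x -> continuous g (f x) -> continuous (fun z => g (f z)) x.
Proof. intros Hf Hg. apply (continuous_comp f g x Hf Hg). Qed.
Lemma cR_sin (f : R -> R) x : continuous f x -> continuous (fun z => sin (f z)) x.
Proof. intros; apply continuous_sin_comp; auto. Qed.
Lemma cR_cos (f : R -> R) x : continuous f x -> continuous (fun z => cos (f z)) x.
Proof. intros; apply continuous_cos_comp; auto. Qed.
Lemma cR_sqrt (f : R -> R) x : continuous f x -> continuous (fun z => sqrt (f z)) x.
Proof. intros; apply continuous_sqrt_comp; auto. Qed.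
Lemma cR_pow (f : R -> R) n x : continuous f x -> continuous (fun z => f z ^ n) x.
Proof. intros Hf; induction n; simpl. apply cR_const. apply cR_mult; auto. Qed.
Lemma cR_ln (f : R -> R) x : continuous f x -> 0 < f x -> continuous (fun z => ln (f z)) x.
Proof. intros Hf H. apply cR_comp; auto. apply continuous_ln; auto. Qed.

Lemma acos_deriv (x : R) : -1 < x < 1 -> is_derive acos x (-1 / sqrt (1 - x²)).
Proof.
  intros Hx. apply is_derive_Reals.
  apply (derive_pt_eq_1 _ _ _ (derivable_pt_acos x Hx)).
  apply derive_pt_acos.
Qed.

Lemma acos_le_m1 x : x <= -1 -> acos x = PI.
Proof. intros H; unfold acos; destruct (Rle_dec x (-1)); [reflexivity| lra]. Qed.

Lemma acos_ge_1 x : 1 <= x -> acos x = 0.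
Proof. intros H; unfold acos; destruct (Rle_dec x (-1)); [lra|].
  destruct (Rle_dec 1 x); [reflexivity|lra]. Qed.

Lemma acos_cont_1 : continuous acos 1.
Proof.
  apply continuity_pt_filterlim.
  intros eps Heps.
  set (e := Rmin eps (PI/2)).
  assert (He : 0 < e) by (unfold e; apply Rmin_pos; [lra| pose proof PI_RGT_0; lra]).
  assert (He2 : e <= PI/2) by (unfold e; apply Rmin_r).
  assert (He3 : e <= eps) by (unfold e; apply Rmin_l).
  assert (Hc1 : cos e < 1).
  { rewrite <- cos_0. apply cos_decreasing_1; pose proof PI_RGT_0; lra. }
  assert (Hc0 : 0 <= cos e).
  { apply cos_ge_0; pose proof PI_RGT_0; lra. }
  exists (1 - cos e). split; [lra|].
  intros z [_ Hz]. unfold dist in *; simpl in *; unfold R_dist in *.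
  rewrite acos_1.
  apply Rabs_def2 in Hz.
  destruct (Rle_dec 1 z) as [H1|H1].
  - rewrite acos_ge_1 by lra. rewrite Rminus_0_r, Rabs_R0; lra.
  - pose proof (acos_bound z) as Hb.
    rewrite Rminus_0_r, Rabs_pos_eq by lra.
    destruct (Rlt_le_dec (acos z) e) as [Hl|Hl]; [lra|].
    exfalso.
    destruct (Rle_lt_or_eq_dec _ _ Hl) as [Hl'|Hl'].
    + assert (cos (acos z) < cos e).
      { apply cos_decreasing_1; pose proof PI_RGT_0; lra. }
      rewrite cos_acos in H by lra. lra.
    + assert (cos (acos z) = cos e) by (rewrite Hl'; reflexivity).
      rewrite cos_acos in H by lra. lra.
Qed.

Lemma acos_cont (x : R) : continuous acos x.
Proof.
  destruct (Rlt_le_dec x (-1)) as [H1|H1].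
  - apply continuous_ext_loc with (fun _ => PI).
    + exists (mkposreal _ (ltac:(lra) : 0 < -1 - x)). intros z Hz.
      unfold ball in Hz; simpl in Hz; unfold AbsRing_ball, abs, minus, plus, opp in Hz; simpl in Hz.
      apply Rabs_def2 in Hz. rewrite acos_le_m1 by lra. reflexivity.
    + apply continuous_const.
  - destruct (Rle_lt_or_eq_dec _ _ H1) as [H2|H2].
    + destruct (Rlt_le_dec x 1) as [H3|H3].
      * apply (ex_derive_continuous (K:=R_AbsRing) (V:=R_NormedModule)). eexists. apply acos_deriv. lra.
      * destruct (Rle_lt_or_eq_dec _ _ H3) as [H4|H4].
        -- apply continuous_ext_loc with (fun _ => 0).
           ++ exists (mkposreal _ (ltac:(lra) : 0 < x - 1)). intros z Hz.
              unfold ball in Hz; simpl in Hz; unfold AbsRing_ball, abs, minus, plus, opp in Hz; simpl in Hz.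
              apply Rabs_def2 in Hz. rewrite acos_ge_1 by lra. reflexivity.
           ++ apply continuous_const.
        -- subst x. apply acos_cont_1.
    + subst x.
      apply continuous_ext_loc with (fun z => PI - acos (- z)).
      * apply filter_forall. intros z. cbv beta. rewrite acos_opp. simpl; lra.
      * apply cR_minus. apply cR_const.
        apply (cR_comp (fun z => - z) acos).
        apply cR_opp, cR_id.
        replace (- -1) with 1 by ring. apply acos_cont_1.
Qed.

Lemma exRInt_c (f : R -> R) a b : (forall z, continuous f z) -> ex_RInt f a b.
Proof. intros Hf. apply (ex_RInt_continuous (V:=R_CompleteNormedModule)). intros; apply Hf. Qed.

Lemma RInt_der (f : R -> R) a x : (forall z, continuous f z) -> is_derive (fun b => RInt f a b) x (f x).
Proof.
  intros Hf. apply (is_derive_RInt (V:=R_NormedModule) f (fun b => RInt f a b) a).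
  apply filter_forall. intros b. apply (RInt_correct (V:=R_CompleteNormedModule)), exRInt_c; auto.
  apply Hf.
Qed.

Lemma RInt_cont (f : R -> R) a x : (forall z, continuous f z) -> continuous (fun b => RInt f a b) x.
Proof.
  intros Hf. apply (ex_derive_continuous (K:=R_AbsRing) (V:=R_NormedModule)).
  eexists. apply RInt_der; auto.
Qed.

Lemma RInt_cont_l (f : R -> R) b x : (forall z, continuous f z) -> continuous (fun a => RInt f a b) x.
Proof.
  intros Hf. apply continuous_ext_loc with (fun a => - RInt f b a).
  - apply filter_forall. intros a. cbv beta. rewrite <- (opp_RInt_swap (V:=R_CompleteNormedModule) f b a). reflexivity.
    apply exRInt_c; auto.
  - apply cR_opp. apply RInt_cont; auto.
Qed.

Lemma ftc' (f F : R -> R) a b : a <= b -> (forall z, continuous f z) ->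
  (forall x, a <= x <= b -> continuous F x) ->
  (forall x, a < x < b -> is_derive F x (f x)) -> RInt f a b = F b - F a.
Proof.
  intros Hab Hf HF HdF.
  set (G := fun x => F x - RInt f a x).
  assert (H1 : forall x, Rmin a b < x < Rmax a b -> is_derive G x 0).
  { intros x Hx. rewrite Rmin_left, Rmax_right in Hx by lra.
    unfold G. replace 0 with (f x - f x) by ring.
    apply (is_derive_minus (K:=R_AbsRing) (V:=R_NormedModule) F (fun b => RInt f a b)). apply HdF; lra. apply RInt_der; auto. }
  assert (H2 : forall x, Rmin a b <= x <= Rmax a b -> continuity_pt G x).
  { intros x Hx. rewrite Rmin_left, Rmax_right in Hx by lra.
    apply continuity_pt_filterlim. unfold G. apply cR_minus. apply HF; lra.
    apply RInt_cont; auto. }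
  destruct (MVT_gen G a b (fun _ => 0) H1 H2) as [c [_ Hc]].
  unfold G in Hc. rewrite (RInt_point (V:=R_CompleteNormedModule)) in Hc. unfold zero in Hc; simpl in Hc. lra.
Qed.

Definition PVs (D : R -> R) y e := RInt (fun s => D s / (s - y)) (-1) (y - e)
   + RInt (fun s => D s / (s - y)) (y + e) 1.

Lemma at_right_small d : 0 < d -> at_right 0 (fun e => 0 < e < d).
Proof.
  intros Hd. exists (mkposreal d Hd). intros e He Hpos. simpl in *.
  unfold ball in He; simpl in He; unfold AbsRing_ball, abs, minus, plus, opp in He; simpl in He.
  apply Rabs_def2 in He. lra.
Qed.

Lemma PV_from (D : R -> R) y v (Phi : R -> R) d : 0 < d ->
  (forall e, 0 < e < d -> PVs D y e = Phi e) -> continuous Phi 0 -> Phi 0 = v -> is_PV D y v.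
Proof.
  intros Hd Heq Hc Hv. unfold is_PV.
  apply filterlim_ext_loc with Phi.
  - eapply filter_imp; [| apply (at_right_small d Hd)]. intros e He. symmetry. apply Heq; auto.
  - rewrite <- Hv. eapply filterlim_filter_le_1; [| exact Hc]. apply filter_le_within.
Qed.

Lemma lim_lin {T} (F : (T -> Prop) -> Prop) {FF : Filter F} (f g : T -> R) v1 v2 a b :
  filterlim f F (locally v1) -> filterlim g F (locally v2) ->
  filterlim (fun x => a * f x + b * g x) F (locally (a * v1 + b * v2)).
Proof.
  intros Hf Hg.
  apply (filterlim_comp_2 (G:=locally (a*v1)) (H:=locally (b*v2)) (fun x => a * f x) (fun x => b * g x) Rplus).
  - apply filterlim_comp with (1 := Hf). apply (filterlim_scal_r (K:=R_AbsRing) (V:=R_NormedModule) a v1).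
  - apply filterlim_comp with (1 := Hg). apply (filterlim_scal_r (K:=R_AbsRing) (V:=R_NormedModule) b v2).
  - apply (filterlim_plus (K:=R_AbsRing) (V:=R_NormedModule)).
Qed.

Lemma RInt_lin (f g : R -> R) a b lo hi : ex_RInt f lo hi -> ex_RInt g lo hi ->
  RInt (fun s => a * f s + b * g s) lo hi = a * RInt f lo hi + b * RInt g lo hi.
Proof.
  intros Hf Hg.
  rewrite (RInt_plus (V:=R_CompleteNormedModule) (fun s => a * f s) (fun s => b * g s)).
  - pose proof (RInt_scal (V:=R_CompleteNormedModule) f lo hi a Hf) as E1.
    pose proof (RInt_scal (V:=R_CompleteNormedModule) g lo hi b Hg) as E2.
    unfold scal in E1, E2; simpl in E1, E2; unfold mult in E1, E2; simpl in E1, E2.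
    rewrite E1, E2. reflexivity.
  - apply (ex_RInt_scal (V:=R_CompleteNormedModule) f lo hi a Hf).
  - apply (ex_RInt_scal (V:=R_CompleteNormedModule) g lo hi b Hg).
Qed.

Lemma exPV_l (D : R -> R) y e : -1 < y -> 0 < e -> (forall z, continuous D z) ->
  ex_RInt (fun s => D s / (s - y)) (-1) (y - e).
Proof.
  intros Hy He HD. apply (ex_RInt_continuous (V:=R_CompleteNormedModule)).
  intros z Hz. assert (z < y).
  { destruct Hz as [_ Hz]. unfold Rmax in Hz. destruct (Rle_dec (-1) (y-e)); lra. }
  apply cR_div; auto. apply cR_minus; [apply cR_id| apply cR_const]. lra.
Qed.

Lemma exPV_r (D : R -> R) y e : y < 1 -> 0 < e -> (forall z, continuous D z) ->
  ex_RInt (fun s => D s / (s - y)) (y + e) 1.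
Proof.
  intros Hy He HD. apply (ex_RInt_continuous (V:=R_CompleteNormedModule)).
  intros z Hz. assert (y < z).
  { destruct Hz as [Hz _]. unfold Rmin in Hz. destruct (Rle_dec (y+e) 1); lra. }
  apply cR_div; auto. apply cR_minus; [apply cR_id| apply cR_const]. lra.
Qed.

Lemma PV_lin (D1 D2 : R -> R) y v1 v2 a b : -1 < y < 1 ->
  (forall z, continuous D1 z) -> (forall z, continuous D2 z) ->
  is_PV D1 y v1 -> is_PV D2 y v2 -> is_PV (fun s => a * D1 s + b * D2 s) y (a * v1 + b * v2).
Proof.
  intros Hy H1 H2 P1 P2. unfold is_PV.
  apply filterlim_ext_loc with (fun e => a * PVs D1 y e + b * PVs D2 y e).
  - eapply filter_imp; [| apply (at_right_small 1 Rlt_0_1)]. intros e He.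
    unfold PVs.
    rewrite (RInt_ext (V:=R_CompleteNormedModule) (fun s => (a * D1 s + b * D2 s) / (s - y))
       (fun s => a * (D1 s / (s - y)) + b * (D2 s / (s - y)))).
    rewrite (RInt_ext (V:=R_CompleteNormedModule) (fun s => (a * D1 s + b * D2 s) / (s - y)) 
       (fun s => a * (D1 s / (s - y)) + b * (D2 s / (s - y))) (y + e)).
    rewrite !RInt_lin. ring.
    all: try (apply exPV_l; auto; lra).
    all: try (apply exPV_r; auto; lra).
    1,2: intros x _; simpl; unfold Rdiv; ring.
  - apply lim_lin; auto.
    apply at_right_proper_filter.
Qed.

Lemma PV_ext (D1 D2 : R -> R) y v : -1 < y < 1 ->
  (forall s, -1 <= s <= 1 -> D1 s = D2 s) -> is_PV D1 y v -> is_PV D2 y v.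
Proof.
  intros Hy Heq P. unfold is_PV in *.
  apply filterlim_ext_loc with (fun e => PVs D1 y e); [| exact P].
  eapply filter_imp; [| apply (at_right_small (Rmin (1 + y) (1 - y)))].
  2: apply Rmin_pos; lra.
  intros e He. cbv beta in He.
  assert (e < 1 + y) by (pose proof (Rmin_l (1+y) (1-y)); lra).
  assert (e < 1 - y) by (pose proof (Rmin_r (1+y) (1-y)); lra).
  unfold PVs. f_equal.
  - apply (RInt_ext (V:=R_CompleteNormedModule)).
    intros x Hx. rewrite Rmin_left, Rmax_right in Hx by lra. simpl. rewrite Heq by lra. reflexivity.
  - apply (RInt_ext (V:=R_CompleteNormedModule)).
    intros x Hx. rewrite Rmin_left, Rmax_right in Hx by lra. simpl. rewrite Heq by lra. reflexivity.
Qed.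

Lemma PV_zero y : is_PV (fun _ => 0) y 0.
Proof.
  unfold is_PV.
  apply filterlim_ext with (fun _ => 0).
  2: apply filterlim_const.
  intros e.
  rewrite (RInt_ext (V:=R_CompleteNormedModule) (fun s => 0 / (s - y)) (fun _ => 0)).
  rewrite (RInt_ext (V:=R_CompleteNormedModule) (fun s => 0 / (s - y)) (fun _ => 0) (y + e)).
  rewrite !(RInt_const (V:=R_CompleteNormedModule)). unfold scal; simpl; unfold mult; simpl. ring.
  all: intros; simpl; unfold Rdiv; ring.
Qed.

Lemma PV_mul_s (D : R -> R) y v : -1 < y < 1 -> (forall z, continuous D z) ->
  is_PV D y v -> is_PV (fun s => s * D s) y (RInt D (-1) 1 + y * v).
Proof.
  intros Hy HD P. unfold is_PV in *.
  set (Psi := fun e => RInt D (-1) (y - e) + RInt D (y + e) 1).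
  apply filterlim_ext_loc with (fun e => 1 * Psi e + y * PVs D y e).
  - eapply filter_imp; [| apply (at_right_small 1 Rlt_0_1)]. intros e He. cbv beta in He.
    unfold PVs, Psi.
    rewrite (RInt_ext (V:=R_CompleteNormedModule) (fun s => (s * D s) / (s - y))
       (fun s => 1 * D s + y * (D s / (s - y))) (-1)).
    rewrite (RInt_ext (V:=R_CompleteNormedModule) (fun s => (s * D s) / (s - y))
       (fun s => 1 * D s + y * (D s / (s - y))) (y + e)).
    rewrite (RInt_lin D (fun s => D s / (s - y)) 1 y (-1) (y - e)).
    rewrite (RInt_lin D (fun s => D s / (s - y)) 1 y (y + e) 1). ring.
    1,3: apply exRInt_c; exact HD.
    1: apply exPV_r; [lra|lra|exact HD].
    1: apply exPV_l; [lra|lra|exact HD].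
    1,2: intros x Hx; simpl.
    1: assert (y < x) by (destruct Hx as [Hx _]; unfold Rmin in Hx; destruct Rle_dec; lra).
    2: assert (x < y) by (destruct Hx as [_ Hx]; unfold Rmax in Hx; destruct Rle_dec; lra).
    1,2: field; lra.
  - replace (RInt D (-1) 1 + y * v) with (1 * RInt D (-1) 1 + y * v) by ring.
    apply lim_lin. 3: exact P.
    apply at_right_proper_filter.
    replace (RInt D (-1) 1) with (Psi 0).
    + eapply filterlim_filter_le_1; [apply filter_le_within|].
      change (continuous Psi 0). unfold Psi. apply cR_plus.
      * apply (cR_comp (fun e => y - e) (fun b => RInt D (-1) b)).
        apply cR_minus; [apply cR_const|apply cR_id]. apply RInt_cont; auto.
      * apply (cR_comp (fun e => y + e) (fun a => RInt D a 1)).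
        apply cR_plus; [apply cR_const|apply cR_id]. apply RInt_cont_l; auto.
    + unfold Psi. rewrite Rminus_0_r, Rplus_0_r.
      pose proof (RInt_Chasles (V:=R_CompleteNormedModule) D (-1) y 1) as E.
      simpl in E. unfold plus in E; simpl in E. apply E; apply exRInt_c; auto.
Qed.

Ltac rr := match goal with |- ?a = ?b => change (a = b :> R) end; ring.

Lemma is_derive_eq (f : R -> R) x l l' : is_derive f x l' -> l' = l -> is_derive f x l.
Proof. intros H ->. exact H. Qed.

Lemma PV_val (D : R -> R) y v v' : is_PV D y v -> v = v' -> is_PV D y v'.
Proof. intros H ->. exact H. Qed.

Lemma sqrt_sq s : -1 <= s <= 1 -> sqrt (1 - s²) * sqrt (1 - s²) = 1 - s².
Proof. intros Hs. apply sqrt_sqrt. unfold Rsqr. nra. Qed.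

Lemma sqrt_pos' s : -1 < s < 1 -> 0 < sqrt (1 - s²).
Proof. intros Hs. apply sqrt_lt_R0. unfold Rsqr. nra. Qed.

Lemma d_w s : -1 < s < 1 -> is_derive (fun s => sqrt (1 - s²)) s (- s / sqrt (1 - s²)).
Proof.
  intros Hs. pose proof (sqrt_pos' s Hs).
  auto_derive. unfold Rsqr; nra.
  replace (1 + - s²) with (1 - s²) by ring. field. lra.
Qed.

Lemma RInt_inv_l y e : 0 < e -> e < 1 + y ->
  RInt (fun s => / (s - y)) (-1) (y - e) = ln e - ln (1 + y).
Proof.
  intros He Hy.
  apply (is_RInt_unique (V:=R_CompleteNormedModule)).
  replace (ln e - ln (1 + y)) with (minus (ln (y - (y - e))) (ln (y - -1))).
  2: { unfold minus, plus, opp; simpl. replace (y - (y - e)) with e by ring.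
       replace (y - -1) with (1 + y) by ring. ring. }
  apply (is_RInt_derive (V:=R_CompleteNormedModule) (fun s => ln (y - s))).
  - intros x Hx. rewrite Rmin_left, Rmax_right in Hx by lra.
    auto_derive. lra. field. lra.
  - intros x Hx. rewrite Rmin_left, Rmax_right in Hx by lra.
    apply cR_inv. apply cR_minus; [apply cR_id|apply cR_const]. lra.
Qed.

Lemma RInt_inv_r y e : 0 < e -> e < 1 - y ->
  RInt (fun s => / (s - y)) (y + e) 1 = ln (1 - y) - ln e.
Proof.
  intros He Hy.
  apply (is_RInt_unique (V:=R_CompleteNormedModule)).
  replace (ln (1 - y) - ln e) with (minus (ln (1 - y)) (ln (y + e - y))).
  2: { unfold minus, plus, opp; simpl. replace (y + e - y) with e by ring. ring. }
  apply (is_RInt_derive (V:=R_CompleteNormedModule) (fun s => ln (s - y))).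
  - intros x Hx. rewrite Rmin_left, Rmax_right in Hx by lra.
    auto_derive. lra. field. lra.
  - intros x Hx. rewrite Rmin_left, Rmax_right in Hx by lra.
    apply cR_inv. apply cR_minus; [apply cR_id|apply cR_const]. lra.
Qed.

Lemma is_derive_plusR (f g : R -> R) x a b : is_derive f x a -> is_derive g x b ->
  is_derive (fun z => f z + g z) x (a + b).
Proof. intros. apply (is_derive_plus (K:=R_AbsRing) (V:=R_NormedModule)); auto. Qed.

Lemma is_derive_scalR (f : R -> R) k x a : is_derive f x a -> is_derive (fun z => k * f z) x (k * a).
Proof. intros H. apply is_derive_scal; auto. Qed.

Lemma is_derive_minusR (f g : R -> R) x a b : is_derive f x a -> is_derive g x b ->
  is_derive (fun z => f z - g z) x (a - b).
Proof. intros. apply (is_derive_minus (K:=R_AbsRing) (V:=R_NormedModule)); auto. Qed.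

Lemma is_derive_constR (c x : R) : is_derive (fun _ : R => c) x 0.
Proof. apply (is_derive_const (K:=R_AbsRing) (V:=R_NormedModule)). Qed.
Lemma is_derive_idR (x : R) : is_derive (fun z : R => z) x 1.
Proof. apply (is_derive_id (K:=R_AbsRing)). Qed.

Section Sq.
Variable y : R.
Hypothesis Hy : -1 < y < 1.

Definition cy := sqrt (1 - y²).
Definition Qf (s : R) := - (s + y) / (sqrt (1 - s²) + cy).
Definition Ff (s : R) := (sqrt (1 - s²) - cy * ln (1 - y * s + cy * sqrt (1 - s²))) + y * acos s.

Lemma cy_pos : 0 < cy.
Proof. unfold cy. apply sqrt_pos'. auto. Qed.

Lemma cy_sq : cy * cy = 1 - y * y.
Proof. unfold cy. rewrite sqrt_sq by lra. unfold Rsqr; ring. Qed.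

Lemma N_pos s : -1 <= s <= 1 -> 0 < 1 - y * s + cy * sqrt (1 - s²).
Proof.
  intros Hs. pose proof cy_pos. pose proof (sqrt_pos (1 - s²)).
  assert (0 <= cy * sqrt (1 - s²)) by (apply Rmult_le_pos; lra).
  assert (y * s < 1).
  { assert (G1: 0 <= (1 - y) * (1 + s)) by (apply Rmult_le_pos; lra).
    destruct (Req_dec s 1) as [->|Hs1]. lra.
    assert (G2: 0 < (1 + y) * (1 - s)) by (apply Rmult_lt_0_compat; lra).
    lra. }
  lra.
Qed.

Lemma Qf_cont z : continuous Qf z.
Proof.
  unfold Qf. pose proof cy_pos. pose proof (sqrt_pos (1 - z²)).
  apply cR_div. apply cR_opp, cR_plus; [apply cR_id|apply cR_const].
  apply cR_plus; [|apply cR_const]. apply cR_sqrt. apply cR_minus; [apply cR_const|].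
  unfold Rsqr. apply cR_mult; apply cR_id. lra.
Qed.

Lemma Ff_deriv s : -1 < s < 1 -> is_derive Ff s (Qf s).
Proof.
  intros Hs. unfold Ff.
  pose proof (sqrt_pos' s Hs) as Hw. pose proof cy_pos as Hc.
  pose proof (N_pos s ltac:(lra)) as HN.
  pose proof (sqrt_sq s ltac:(lra)) as E1. pose proof cy_sq as E2.
  set (w := sqrt (1 - s²)) in *. set (c := cy) in *.
  set (N := 1 - y * s + c * w) in *.
  apply is_derive_eq with ((- s / w - c * ((- y - c * s / w) / N)) + y * (-1 / w)).
  - apply is_derive_plusR.
    + apply is_derive_eq with (- s / w - c * ((- y + c * (- s / w)) / N)).
      * apply is_derive_minusR. apply d_w; auto.
        apply is_derive_scalR.
        apply is_derive_eq with ((- y + c * (- s / w)) * / N).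
        -- apply (is_derive_comp ln (fun s => 1 - y * s + c * sqrt (1 - s²))).
           apply is_derive_Reals, derivable_pt_lim_ln. exact HN.
           apply is_derive_eq with ((0 - y * 1) + c * (- s / w)).
           apply is_derive_plusR.
           apply is_derive_minusR. apply is_derive_constR. apply is_derive_scalR, is_derive_idR.
           apply is_derive_scalR. apply d_w; auto.
           rr.
        -- unfold Rdiv; rr.
      * unfold Rdiv; rr.
    + apply is_derive_scalR. apply acos_deriv. auto.
  - unfold Qf. fold w c. match goal with |- ?a = ?b => change (a = b :> R) end.
    unfold Rsqr in E1.
    assert (Hk : (y * w + c * s) * (w + c) - (s + y) * N = y * (w * w - (1 - s * s)) + s * (c * c - (1 - y * y))) by (unfold N; ring).
    rewrite E1, E2 in Hk.
    assert (K : (y * w + c * s) * (w + c) = (s + y) * N).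
    { apply Rminus_diag_uniq. rewrite Hk. ring. }
    replace (- s / w - c * ((- y - c * s / w) / N) + y * (-1 / w))
      with (- (s + y) / w + c * ((y * w + c * s) * (w + c)) / (w * N * (w + c))).
    2: { field. repeat split; lra. }
    rewrite K. field. repeat split; lra.
Qed.

Lemma sqrt_1m1 : sqrt (1 - 1²) = 0.
Proof. replace (1 - 1²) with 0 by (unfold Rsqr; ring). apply sqrt_0. Qed.
Lemma sqrt_1m1' : sqrt (1 - (-1)²) = 0.
Proof. replace (1 - (-1)²) with 0 by (unfold Rsqr; ring). apply sqrt_0. Qed.

Lemma RInt_Qf : RInt Qf (-1) 1 = - PI * y - cy * ln (1 - y) + cy * ln (1 + y).
Proof.
  rewrite (ftc' Qf Ff (-1) 1).
  - unfold Ff. rewrite sqrt_1m1, sqrt_1m1', acos_1, acos_le_m1 by lra.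
    idtac.
    replace (1 - y * 1 + cy * 0) with (1 - y) by rr. replace (1 - y * -1 + cy * 0) with (1 + y) by rr. rr.
  - lra.
  - apply Qf_cont.
  - intros x Hx. unfold Ff. pose proof (N_pos x Hx).
    apply cR_plus.
    + apply cR_minus. apply cR_sqrt. unfold Rsqr. apply cR_minus; [apply cR_const| apply cR_mult; apply cR_id].
      apply cR_mult; [apply cR_const|]. apply cR_ln; auto.
      apply cR_plus. apply cR_minus; [apply cR_const| apply cR_mult; [apply cR_const|apply cR_id]].
      apply cR_mult; [apply cR_const|]. apply cR_sqrt. unfold Rsqr. apply cR_minus; [apply cR_const| apply cR_mult; apply cR_id].
    + apply cR_mult; [apply cR_const| apply acos_cont].
  - apply Ff_deriv.
Qed.

End Sq.

Lemma exinv_l y e : -1 < y -> 0 < e -> ex_RInt (fun s => / (s - y)) (-1) (y - e).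
Proof.
  intros Hy He. apply (ex_RInt_continuous (V:=R_CompleteNormedModule)).
  intros z Hz. assert (z < y).
  { destruct Hz as [_ Hz]. unfold Rmax in Hz. destruct (Rle_dec (-1) (y-e)); lra. }
  apply cR_inv. apply cR_minus; [apply cR_id| apply cR_const]. lra.
Qed.

Lemma exinv_r y e : y < 1 -> 0 < e -> ex_RInt (fun s => / (s - y)) (y + e) 1.
Proof.
  intros Hy He. apply (ex_RInt_continuous (V:=R_CompleteNormedModule)).
  intros z Hz. assert (y < z).
  { destruct Hz as [Hz _]. unfold Rmin in Hz. destruct (Rle_dec (y+e) 1); lra. }
  apply cR_inv. apply cR_minus; [apply cR_id| apply cR_const]. lra.
Qed.

Lemma Q_id y s : -1 < y < 1 -> -1 <= s <= 1 -> s <> y ->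
  sqrt (1 - s²) / (s - y) = 1 * Qf y s + cy y * / (s - y).
Proof.
  intros Hy Hs Hsy. unfold Qf.
  pose proof (sqrt_sq s Hs) as E1. pose proof (cy_sq y Hy) as E2.
  pose proof (cy_pos y Hy) as Hc. pose proof (sqrt_pos (1 - s²)) as Hw.
  set (w := sqrt (1 - s²)) in *. set (c := cy y) in *.
  unfold Rsqr in E1.
  assert (K2 : (w - c) * (w + c) = - (s + y) * (s - y)).
  { apply Rminus_diag_uniq.
    replace ((w - c) * (w + c) - - (s + y) * (s - y)) with ((w * w - (1 - s * s)) - (c * c - (1 - y * y))) by ring.
    rewrite E1, E2. ring. }
  assert (Hsy' : s - y <> 0) by lra.
  replace (- (s + y)) with ((w - c) * (w + c) / (s - y)).
  2: { rewrite K2. field. auto. }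
  field. split; lra.
Qed.

Lemma PV_sqrt y : -1 < y < 1 -> is_PV (fun s => sqrt (1 - s²)) y (- PI * y).
Proof.
  intros Hy.
  set (c := cy y).
  set (Phi := fun e => RInt (Qf y) (-1) (y - e) + RInt (Qf y) (y + e) 1 + c * (ln (1 - y) - ln (1 + y))).
  apply PV_from with Phi (Rmin (1 + y) (1 - y)).
  - apply Rmin_pos; lra.
  - intros e He.
    assert (e < 1 + y) by (pose proof (Rmin_l (1+y) (1-y)); lra).
    assert (e < 1 - y) by (pose proof (Rmin_r (1+y) (1-y)); lra).
    unfold PVs, Phi.
    rewrite (RInt_ext (V:=R_CompleteNormedModule) (fun s => sqrt (1 - s²) / (s - y))
       (fun s => 1 * Qf y s + c * / (s - y)) (-1)).
    rewrite (RInt_ext (V:=R_CompleteNormedModule) (fun s => sqrt (1 - s²) / (s - y))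
       (fun s => 1 * Qf y s + c * / (s - y)) (y + e)).
    rewrite (RInt_lin (Qf y) (fun s => / (s - y)) 1 c (-1) (y - e)).
    rewrite (RInt_lin (Qf y) (fun s => / (s - y)) 1 c (y + e) 1).
    rewrite RInt_inv_l, RInt_inv_r by lra. rr.
    + apply exRInt_c. apply Qf_cont. lra.
    + apply exinv_r; lra.
    + apply exRInt_c. apply Qf_cont. lra.
    + apply exinv_l; lra.
    + intros x Hx. rewrite Rmin_left, Rmax_right in Hx by lra. simpl. apply Q_id; lra.
    + intros x Hx. rewrite Rmin_left, Rmax_right in Hx by lra. simpl. apply Q_id; lra.
  - unfold Phi. apply cR_plus; [|apply cR_const]. apply cR_plus.
    + apply (cR_comp (fun e => y - e) (fun b => RInt (Qf y) (-1) b)).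
      apply cR_minus; [apply cR_const|apply cR_id]. apply RInt_cont. apply Qf_cont; lra.
    + apply (cR_comp (fun e => y + e) (fun a => RInt (Qf y) a 1)).
      apply cR_plus; [apply cR_const|apply cR_id]. apply RInt_cont_l. apply Qf_cont; lra.
  - unfold Phi. rewrite Rminus_0_r, Rplus_0_r.
    pose proof (RInt_Chasles (V:=R_CompleteNormedModule) (Qf y) (-1) y 1) as E.
    simpl in E. unfold plus in E; simpl in E. rewrite E.
    rewrite RInt_Qf by lra. unfold c. rr.
    apply exRInt_c; apply Qf_cont; lra.
    apply exRInt_c; apply Qf_cont; lra.
Qed.

Lemma cos_pm a t : cos ((a - 1) * t) - cos ((a + 1) * t) = 2 * sin (a * t) * sin t.
Proof.
  replace ((a + 1) * t) with (a * t + t) by ring. replace ((a - 1) * t) with (a * t - t) by ring.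
  rewrite cos_plus, cos_minus. ring.
Qed.
Lemma sin_rec a t : sin ((a + 1) * t) + sin ((a - 1) * t) = 2 * cos t * sin (a * t).
Proof.
  replace ((a + 1) * t) with (a * t + t) by ring. replace ((a - 1) * t) with (a * t - t) by ring.
  rewrite sin_plus, sin_minus. ring.
Qed.
Lemma cos_rec a t : cos ((a + 1) * t) + cos ((a - 1) * t) = 2 * cos t * cos (a * t).
Proof.
  replace ((a + 1) * t) with (a * t + t) by ring. replace ((a - 1) * t) with (a * t - t) by ring.
  rewrite cos_plus, cos_minus. ring.
Qed.

Lemma sin_INR_PI j : sin (INR j * PI) = 0.
Proof.
  induction j. simpl. rewrite Rmult_0_l. apply sin_0.
  rewrite S_INR. replace ((INR j + 1) * PI) with (INR j * PI + PI) by ring.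
  rewrite sin_plus, IHj, sin_PI. ring.
Qed.

Lemma cont_fk (a z : R) : continuous (fun s => sin (a * acos s)) z.
Proof. apply cR_sin. apply cR_mult; [apply cR_const| apply acos_cont]. Qed.

Lemma d_sin_acos a s : -1 < s < 1 ->
  is_derive (fun s => sin (a * acos s)) s (cos (a * acos s) * (a * (-1 / sqrt (1 - s²)))).
Proof.
  intros Hs.
  apply is_derive_eq with (scal (a * (-1 / sqrt (1 - s²))) (cos (a * acos s))).
  - apply (is_derive_comp sin (fun s => a * acos s)).
    apply is_derive_Reals, derivable_pt_lim_sin.
    apply is_derive_scalR, acos_deriv; auto.
  - unfold scal; simpl; unfold mult; simpl. ring.
Qed.

Ltac toR := match goal with |- ?a = ?b => change (a = b :> R) end.

Lemma int_f1 : RInt (fun s => sin (INR 1 * acos s)) (-1) 1 = PI / 2.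
Proof.
  rewrite (ftc' _ (fun s => / 2 * (/ 2 * sin (2 * acos s) - acos s)) (-1) 1).
  - rewrite acos_1, acos_le_m1 by lra. rewrite Rmult_0_r, sin_0, sin_2PI. toR. field.
  - lra.
  - apply cont_fk.
  - intros x Hx. apply cR_mult; [apply cR_const|]. apply cR_minus; [|apply acos_cont].
    apply cR_mult; [apply cR_const|apply cont_fk].
  - intros x Hx.
    pose proof (sqrt_pos' x Hx) as Hw.
    apply is_derive_eq with (/ 2 * (/ 2 * (cos (2 * acos x) * (2 * (-1 / sqrt (1 - x²)))) - (-1 / sqrt (1 - x²)))).
    + apply is_derive_scalR. apply is_derive_minusR.
      apply is_derive_scalR. apply d_sin_acos; auto.
      apply acos_deriv; auto.
    + rewrite cos_2a_sin. simpl INR. rewrite Rmult_1_l. rewrite sin_acos by lra.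
      pose proof (sqrt_sq x ltac:(lra)) as E1.
      toR. field. lra.
Qed.

Lemma INR_ge2 k : (2 <= k)%nat -> 2 <= INR k.
Proof. intros H. apply le_INR in H. simpl in H. lra. Qed.

Lemma int_fk k : (2 <= k)%nat -> RInt (fun s => sin (INR k * acos s)) (-1) 1 = 0.
Proof.
  intros Hk. pose proof (INR_ge2 k Hk) as HK.
  set (K := INR k).
  assert (EK1 : K + 1 = INR (S k)) by (unfold K; rewrite S_INR; ring).
  assert (EK2 : K - 1 = INR (k - 1)) by (unfold K; rewrite minus_INR by lia; simpl; ring).
  rewrite (ftc' _ (fun s => / 2 * (/ (K + 1) * sin ((K + 1) * acos s) - / (K - 1) * sin ((K - 1) * acos s))) (-1) 1).
  - rewrite acos_1, acos_le_m1 by lra. rewrite !Rmult_0_r, sin_0.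
    rewrite EK1, EK2, !sin_INR_PI. toR. ring.
  - lra.
  - apply cont_fk.
  - intros x Hx. apply cR_mult; [apply cR_const|]. apply cR_minus;
    apply cR_mult; (apply cR_const || apply cont_fk).
  - intros x Hx.
    pose proof (sqrt_pos' x Hx) as Hw.
    apply is_derive_eq with (/ 2 * (/ (K + 1) * (cos ((K + 1) * acos x) * ((K + 1) * (-1 / sqrt (1 - x²))))
        - / (K - 1) * (cos ((K - 1) * acos x) * ((K - 1) * (-1 / sqrt (1 - x²)))))).
    + apply is_derive_scalR. apply is_derive_minusR.
      apply is_derive_scalR. apply d_sin_acos; auto.
      apply is_derive_scalR. apply d_sin_acos; auto.
    + pose proof (cos_pm K (acos x)) as Hc.
      replace (cos ((K - 1) * acos x)) with (cos ((K + 1) * acos x) + 2 * sin (K * acos x) * sin (acos x)) by lra.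
      rewrite sin_acos by lra. fold K.
      toR. field. unfold K in *; repeat split; lra.
Qed.

Definition fk (j : nat) := fun s => sin (INR j * acos s).

Lemma cont_fk' j z : continuous (fk j) z.
Proof. apply cont_fk. Qed.

Lemma cont_sfk j z : continuous (fun s => s * fk j s) z.
Proof. apply cR_mult; [apply cR_id| apply cont_fk]. Qed.

Lemma PV_rec_nat y k v1 v0 I : -1 < y < 1 -> is_PV (fk (S k)) y v1 -> is_PV (fk k) y v0 ->
  RInt (fk (S k)) (-1) 1 = I -> is_PV (fk (S (S k))) y (2 * (I + y * v1) + -1 * v0).
Proof.
  intros Hy P1 P0 HI.
  pose proof (PV_mul_s (fk (S k)) y v1 Hy (cont_fk' (S k)) P1) as H1.
  pose proof (PV_lin (fun s => s * fk (S k) s) (fk k) y _ _ 2 (-1) Hy (cont_sfk (S k)) (cont_fk' k) H1 P0) as H2.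
  rewrite HI in H2.
  apply PV_ext with (3 := H2); auto.
  - intros s Hs. unfold fk. rewrite !S_INR.
    pose proof (sin_rec (INR k + 1) (acos s)) as E.
    replace (INR k + 1 - 1) with (INR k) in E by ring.
    rewrite cos_acos in E by lra. lra.
Qed.

Lemma PV_fk y : -1 < y < 1 -> forall k, (1 <= k)%nat -> is_PV (fk k) y (- PI * cos (INR k * acos y)).
Proof.
  intros Hy.
  assert (Hall : forall k, is_PV (fk (S k)) y (- PI * cos (INR (S k) * acos y)) /\
                           is_PV (fk (S (S k))) y (- PI * cos (INR (S (S k)) * acos y))).
  { induction k as [|k [IH1 IH2]].
    - assert (P1 : is_PV (fk 1) y (- PI * cos (INR 1 * acos y))).
      { apply PV_ext with (fun s => sqrt (1 - s²)); auto.
        + intros s Hs. unfold fk. simpl INR. rewrite Rmult_1_l, sin_acos; auto.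
        + simpl INR. rewrite Rmult_1_l, cos_acos by lra. apply PV_sqrt; auto. }
      split; auto.
      assert (P0 : is_PV (fk 0) y 0).
      { apply PV_ext with (fun _ => 0); auto.
        + intros s Hs. unfold fk. simpl INR. rewrite Rmult_0_l, sin_0. reflexivity.
        + apply PV_zero. }
      eapply PV_val. apply (PV_rec_nat y 0 _ _ (PI / 2) Hy P1 P0). apply int_f1.
      replace (INR 2) with 2 by (simpl; lra). simpl INR. rewrite Rmult_1_l.
      rewrite cos_2a_cos, cos_acos by lra. field.
    - split; [exact IH2|].
      eapply PV_val. apply (PV_rec_nat y (S k) _ _ 0 Hy IH2 IH1). apply int_fk. lia.
      pose proof (cos_rec (INR (S (S k))) (acos y)) as E.
      rewrite <- S_INR in E. replace (INR (S (S k)) - 1) with (INR (S k)) in E by (rewrite (S_INR (S k)); ring).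
      rewrite cos_acos in E by lra.
      replace (cos (INR (S (S (S k))) * acos y)) with (2 * y * cos (INR (S (S k)) * acos y) - cos (INR (S k) * acos y)) by lra. toR. ring. }
  intros k Hk. destruct k. lia. exact (proj1 (Hall k)).
Qed.

Fixpoint bn (p j : nat) : R :=
  match p, j with
  | O, O => 1
  | O, S _ => 0
  | S p', O => 1
  | S p', S j' => bn p' j' + bn p' (S j')
  end.

Lemma bn_0 p : bn p 0 = 1.
Proof. destruct p; reflexivity. Qed.

Lemma bn_gt p : forall j, (p < j)%nat -> bn p j = 0.
Proof.
  induction p; intros j Hj.
  - destruct j. lia. reflexivity.
  - destruct j. lia. simpl. rewrite !IHp by lia. ring.
Qed.

Lemma C_n_0' n : Binomial.C n 0 = 1.
Proof. unfold Binomial.C. rewrite Nat.sub_0_r. change (Factorial.fact 0) with 1%nat. change (INR 1) with 1. field. apply INR_fact_neq_0. Qed.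
Lemma C_n_n' n : Binomial.C n n = 1.
Proof. unfold Binomial.C. rewrite Nat.sub_diag. change (Factorial.fact 0) with 1%nat. change (INR 1) with 1. field. apply INR_fact_neq_0. Qed.

Lemma bn_C p : forall j, (j <= p)%nat -> bn p j = Binomial.C p j.
Proof.
  induction p; intros j Hj.
  - destruct j. simpl. rewrite C_n_0'. reflexivity. lia.
  - destruct j. rewrite bn_0, C_n_0'. reflexivity.
    simpl. destruct (Nat.eq_dec j p) as [->|Hne].
    + rewrite (bn_gt p (S p)) by lia. rewrite IHp by lia. rewrite !C_n_n'. ring.
    + rewrite !IHp by lia. apply pascal. lia.
Qed.

Lemma sum_ext (f g : nat -> R) N : (forall i, (i <= N)%nat -> f i = g i) -> sum_f_R0 f N = sum_f_R0 g N.
Proof. intros H. apply sum_eq. auto. Qed.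

Lemma sum_plus' (f g : nat -> R) N : sum_f_R0 (fun i => f i + g i) N = sum_f_R0 f N + sum_f_R0 g N.
Proof. induction N; simpl; [ring| rewrite IHN; ring]. Qed.

Lemma sum_scal_l (f : nat -> R) c N : sum_f_R0 (fun i => c * f i) N = c * sum_f_R0 f N.
Proof. induction N; simpl; [ring| rewrite IHN; ring]. Qed.

Lemma sum_shift (f : nat -> R) N : sum_f_R0 f (S N) = f O + sum_f_R0 (fun i => f (S i)) N.
Proof. induction N. simpl. ring. rewrite tech5, IHN. simpl. ring. Qed.

Fixpoint dlt (p : nat) (g : R -> R) (x : R) : R :=
  match p with O => g x | S p' => dlt p' g x - dlt p' g (x + 2) end.

Lemma dlt_binom p (g : R -> R) : forall x,
  dlt p g x = sum_f_R0 (fun j => (-1) ^ j * bn p j * g (x + 2 * INR j)) p.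
Proof.
  induction p; intros x.
  - simpl. replace (x + 2 * 0) with x by ring. ring.
  - simpl dlt. rewrite !IHp.
    set (a := fun j => (-1) ^ j * bn p j * g (x + 2 * INR j)).
    set (b := fun j => (-1) ^ j * bn p j * g (x + 2 + 2 * INR j)).
    change (sum_f_R0 a p - sum_f_R0 b p = sum_f_R0 (fun j => (-1) ^ j * bn (S p) j * g (x + 2 * INR j)) (S p)).
    rewrite sum_shift.
    rewrite (sum_ext (fun i => (-1) ^ S i * bn (S p) (S i) * g (x + 2 * INR (S i)))
               (fun i => a (S i) + - b i)).
    2: { intros i Hi. unfold a, b. simpl bn. rewrite S_INR.
         replace (x + 2 * (INR i + 1)) with (x + 2 + 2 * INR i) by ring. simpl pow. ring. }
    rewrite sum_plus'.
    assert (Ha : sum_f_R0 a (S p) = a O + sum_f_R0 (fun i => a (S i)) p) by apply sum_shift.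
    rewrite tech5 in Ha.
    assert (HaS : a (S p) = 0) by (unfold a; rewrite bn_gt by lia; ring).
    assert (Ha0 : a O = g x) by (unfold a; rewrite bn_0; simpl; replace (x + 2 * 0) with x by ring; ring).
    assert (Hb : sum_f_R0 (fun i => - b i) p = - sum_f_R0 b p).
    { transitivity (-1 * sum_f_R0 b p). rewrite <- sum_scal_l. apply sum_ext. intros; ring. ring. }
    rewrite Hb. rewrite bn_0. simpl pow. replace (x + 2 * INR 0) with x by (simpl; ring).
    lra.
Qed.

Lemma sin_shift_key u t : sin u - sin (u + 2 * t) = 2 * sin t * sin (u + t - PI / 2).
Proof.
  replace (sin u) with (sin ((u + t) - t)) by (f_equal; ring).
  replace (sin (u + 2 * t)) with (sin ((u + t) + t)) by (f_equal; ring).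
  rewrite (sin_minus (u + t) t), (sin_plus (u + t) t), (sin_minus (u + t) (PI / 2)), cos_PI2, sin_PI2. ring.
Qed.

Lemma dlt_sin p t b : forall x,
  dlt p (fun z => sin (z * t + b)) x = (2 * sin t) ^ p * sin ((x + INR p) * t + b - INR p * (PI / 2)).
Proof.
  induction p; intros x.
  - simpl. replace ((x + 0) * t + b - 0 * (PI / 2)) with (x * t + b) by ring. ring.
  - simpl dlt. rewrite !IHp.
    replace ((x + 2 + INR p) * t + b - INR p * (PI / 2)) with (((x + INR p) * t + b - INR p * (PI / 2)) + 2 * t) by ring.
    rewrite <- Rmult_minus_distr_l, sin_shift_key. rewrite S_INR. simpl pow.
    replace ((x + INR p) * t + b - INR p * (PI / 2) + t - PI / 2) with ((x + (INR p + 1)) * t + b - (INR p + 1) * (PI / 2)) by ring.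
    ring.
Qed.

Lemma sin_mPI z m : sin (z + INR m * PI) = (-1) ^ m * sin z.
Proof.
  induction m. simpl. rewrite Rmult_0_l, Rplus_0_r. ring.
  rewrite S_INR. replace (z + (INR m + 1) * PI) with ((z + INR m * PI) + PI) by ring.
  rewrite sin_plus, sin_PI, cos_PI, IHm. simpl pow. ring.
Qed.

Definition Aj (m j : nat) : R := (1 / 2) ^ (2 * m - 1) * (-1) ^ m * ((-1) ^ j * Binomial.C (2 * m - 1) j).
Definition kj (n m j : nat) : nat := (n + 1 + 2 * j - 2 * m)%nat.

Lemma INR_kj n m j : (2 * m <= n + 1 + 2 * j)%nat -> INR (kj n m j) = INR n + 1 + 2 * INR j - 2 * INR m.
Proof.
  intros H. unfold kj. rewrite minus_INR by lia. rewrite !plus_INR, !mult_INR. simpl. ring.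
Qed.

Lemma D_eq m n s : (1 <= m)%nat -> (2 * m + 2 <= n)%nat -> -1 <= s <= 1 ->
  chebT n s * ((1 - s ^ 2) ^ (m - 1) * sqrt (1 - s ^ 2)) =
  sum_f_R0 (fun j => Aj m j * fk (kj n m j) s) (2 * m - 1).
Proof.
  intros Hm Hn Hs.
  unfold chebT, Aj, fk.
  set (p := (2 * m - 1)%nat).
  set (t := acos s).
  assert (Hsin : sin t = sqrt (1 - s ^ 2)).
  { unfold t. rewrite sin_acos by lra. f_equal. unfold Rsqr; ring. }
  assert (Hsq : 1 - s ^ 2 = sin t ^ 2).
  { rewrite Hsin. rewrite pow2_sqrt. reflexivity. nra. }
  rewrite <- Hsin, Hsq. rewrite <- pow_mult.
  assert (Hp : p = S (2 * (m - 1))) by (unfold p; lia).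
  replace (sin t ^ (2 * (m - 1)) * sin t) with (sin t ^ p) by (rewrite Hp; simpl; ring).
  assert (HINRp : INR p = 2 * INR m - 1).
  { unfold p. rewrite minus_INR by lia. rewrite mult_INR. simpl. ring. }
  set (x0 := INR n - INR p).
  pose proof (dlt_sin p t (INR m * PI) x0) as Hd.
  replace ((x0 + INR p) * t + INR m * PI - INR p * (PI / 2)) with (INR n * t + PI / 2) in Hd
    by (unfold x0; rewrite HINRp; field).
  rewrite sin_plus, cos_PI2, sin_PI2 in Hd.
  rewrite Rpow_mult_distr in Hd.
  assert (Hcos : cos (INR n * t) * sin t ^ p = (1 / 2) ^ p * dlt p (fun z => sin (z * t + INR m * PI)) x0).
  { rewrite Hd. replace (sin (INR n * t) * 0 + cos (INR n * t) * 1) with (cos (INR n * t)) by ring.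
    replace ((1 / 2) ^ p * (2 ^ p * sin t ^ p * cos (INR n * t))) with (((1 / 2) * 2) ^ p * (sin t ^ p * cos (INR n * t))).
    2: { rewrite Rpow_mult_distr. ring. }
    replace (1 / 2 * 2) with 1 by field. rewrite pow1. ring. }
  rewrite Hcos, dlt_binom, <- sum_scal_l.
  apply sum_ext. intros j Hj.
  rewrite bn_C by lia. rewrite sin_mPI.
  replace (x0 + 2 * INR j) with (INR (kj n m j)).
  2: { rewrite INR_kj by lia. unfold x0. rewrite HINRp. ring. }
  ring.
Qed.

Lemma PV_scal (D : R -> R) y v a : -1 < y < 1 -> (forall z, continuous D z) ->
  is_PV D y v -> is_PV (fun s => a * D s) y (a * v).
Proof.
  intros Hy HD P.
  pose proof (PV_lin D D y v v a 0 Hy HD HD P P) as H.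
  eapply PV_val.
  - apply PV_ext with (3 := H); auto. intros s _. ring.
  - ring.
Qed.

Lemma cont_sum (F : nat -> R -> R) N z : (forall j z, continuous (F j) z) ->
  continuous (fun s => sum_f_R0 (fun j => F j s) N) z.
Proof.
  intros HF. induction N; simpl.
  - apply HF.
  - apply cR_plus; auto.
Qed.

Lemma PV_sum (F : nat -> R -> R) (V : nat -> R) y N : -1 < y < 1 ->
  (forall j z, continuous (F j) z) -> (forall j, (j <= N)%nat -> is_PV (F j) y (V j)) ->
  is_PV (fun s => sum_f_R0 (fun j => F j s) N) y (sum_f_R0 V N).
Proof.
  intros Hy HF HV. induction N; simpl.
  - apply HV; lia.
  - pose proof (PV_lin _ (F (S N)) y _ _ 1 1 Hy (fun z => cont_sum F N z HF) (HF (S N)) (IHN ltac:(intros; apply HV; lia)) (HV (S N) ltac:(lia))) as H.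
    eapply PV_val.
    + apply PV_ext with (3 := H); auto. intros s _. ring.
    + ring.
Qed.

Lemma is_derive_sum (F : nat -> R -> R) (F' : nat -> R) x N :
  (forall j, (j <= N)%nat -> is_derive (F j) x (F' j)) ->
  is_derive (fun y => sum_f_R0 (fun j => F j y) N) x (sum_f_R0 F' N).
Proof.
  intros H. induction N; simpl.
  - apply H; lia.
  - apply is_derive_plusR. apply IHN; intros; apply H; lia. apply H; lia.
Qed.

Lemma d_cos_acos a s : -1 < s < 1 ->
  is_derive (fun s => cos (a * acos s)) s (- sin (a * acos s) * (a * (-1 / sqrt (1 - s²)))).
Proof.
  intros Hs.
  apply is_derive_eq with (scal (a * (-1 / sqrt (1 - s²))) (- sin (a * acos s))).
  - apply (is_derive_comp cos (fun s => a * acos s)).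
    apply is_derive_Reals, derivable_pt_lim_cos.
    apply is_derive_scalR, acos_deriv; auto.
  - unfold scal; simpl; unfold mult; simpl. ring.
Qed.

Lemma INR_u1 n m j : (2 * m + 2 <= n)%nat -> INR (n - 1 - 2 * m + 2 * j + 1) = INR n - 2 * INR m + 2 * INR j.
Proof.
  intros H. replace (n - 1 - 2 * m + 2 * j + 1)%nat with (n - 2 * m + 2 * j)%nat by lia.
  rewrite plus_INR, minus_INR by lia. rewrite !mult_INR. simpl. ring.
Qed.

Lemma INR_u2 n m j : (2 * m + 2 <= n)%nat -> INR (n + 1 - 2 * m + 2 * j + 1) = INR n + 2 - 2 * INR m + 2 * INR j.
Proof.
  intros H. replace (n + 1 - 2 * m + 2 * j + 1)%nat with (n - 2 * m + 2 * j + 2)%nat by lia.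
  rewrite !plus_INR, minus_INR by lia. rewrite !mult_INR. simpl. ring.
Qed.

Theorem mainTheorem5 (m n : nat) (r : R) :
  (1 <= m)%nat -> (2 * m + 2 <= n)%nat -> Rabs r < 1 ->
  is_FP (fun s => chebT n s * ((1 - s ^ 2) ^ (m - 1) * sqrt (1 - s ^ 2))) 2 r
    ((-1) ^ (m + 1) * (1 / 2) ^ (2 * m + 1) * (PI / (1 - r ^ 2)) *
     sum_f_R0 (fun j =>
       (-1) ^ j * Binomial.C (2 * m - 1) j * (INR n + 1 - 2 * INR m + 2 * INR j) *
       ((INR n + 2 - 2 * INR m + 2 * INR j) * chebU (n - 1 - 2 * m + 2 * j) r
        - (INR n - 2 * INR m + 2 * INR j) * chebU (n + 1 - 2 * m + 2 * j) r))
     (2 * m - 1)).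
Proof.
  intros Hm Hn Hr.
  apply Rabs_def2 in Hr. assert (Hr0 : -1 < r < 1) by lra. clear Hr. rename Hr0 into Hr.
  set (p := (2 * m - 1)%nat).
  set (Kr := fun j => INR (kj n m j)).
  set (h := fun y => sum_f_R0 (fun j => Aj m j * (- PI * cos (Kr j * acos y))) p).
  set (g := fun x => sum_f_R0 (fun j => Aj m j * (- PI * Kr j) * (sin (Kr j * acos x) / sqrt (1 - x²))) p).
  exists g. split.
  - intros x Hx. exists h. split.
    + intros y Hy. simpl is_FP. unfold h.
      apply PV_ext with (fun s => sum_f_R0 (fun j => Aj m j * fk (kj n m j) s) p); auto.
      * intros s Hs. symmetry. apply D_eq; auto.
      * apply PV_sum; auto.
        -- intros j z. apply cR_mult. apply cR_const. apply cont_fk'.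
        -- intros j Hj. apply PV_scal; auto. apply cont_fk'. apply PV_fk; auto.
           unfold kj. lia.
    + unfold h, g. simpl INR. rewrite Rmult_1_l.
      pose proof (sqrt_pos' x Hx) as Hw.
      apply is_derive_eq with (sum_f_R0 (fun j => Aj m j * (- PI * (- sin (Kr j * acos x) * (Kr j * (-1 / sqrt (1 - x²)))))) p).
      * apply (is_derive_sum (fun j y => Aj m j * (- PI * cos (Kr j * acos y)))).
        intros j Hj. apply is_derive_scalR. apply is_derive_scalR. apply d_cos_acos; auto.
      * apply sum_ext. intros j Hj. field. lra.
  - pose proof (sqrt_pos' r Hr) as Hw.
    apply is_derive_eq with (sum_f_R0 (fun j => Aj m j * (- PI * Kr j) * ((cos (Kr j * acos r) * (Kr j * (-1 / sqrt (1 - r²))) * sqrt (1 - r²) - sin (Kr j * acos r) * (- r / sqrt (1 - r²))) / sqrt (1 - r²) ^ 2)) p).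
    + apply (is_derive_sum (fun j x => Aj m j * (- PI * Kr j) * (sin (Kr j * acos x) / sqrt (1 - x²)))).
      intros j Hj. apply is_derive_scalR.
      apply (is_derive_div (fun x => sin (Kr j * acos x)) (fun x => sqrt (1 - x²))).
      apply d_sin_acos; auto. apply d_w; auto. lra.
    + rewrite <- !sum_scal_l. apply sum_ext. intros j Hj.
      unfold chebU. rewrite INR_u1, INR_u2 by auto.
      unfold Kr. rewrite INR_kj by lia.
      set (K := INR n + 1 + 2 * INR j - 2 * INR m).
      replace (INR n - 2 * INR m + 2 * INR j) with (K - 1) by (unfold K; ring).
      replace (INR n + 2 - 2 * INR m + 2 * INR j) with (K + 1) by (unfold K; ring).
      replace (INR n + 1 - 2 * INR m + 2 * INR j) with K by (unfold K; ring).
      assert (E1 : sin ((K - 1) * acos r) = sin (K * acos r) * r - cos (K * acos r) * sqrt (1 - r²)).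
      { replace ((K - 1) * acos r) with (K * acos r - acos r) by ring.
        rewrite sin_minus, cos_acos, sin_acos by lra. ring. }
      assert (E2 : sin ((K + 1) * acos r) = sin (K * acos r) * r + cos (K * acos r) * sqrt (1 - r²)).
      { replace ((K + 1) * acos r) with (K * acos r + acos r) by ring.
        rewrite sin_plus, cos_acos, sin_acos by lra. ring. }
      rewrite E1, E2, sin_acos by lra.
      assert (Ew : 1 - r ^ 2 = sqrt (1 - r²) ^ 2).
      { rewrite pow2_sqrt. unfold Rsqr; ring. unfold Rsqr; nra. }
      rewrite Ew.
      unfold Aj. unfold p.
      replace (2 * m + 1)%nat with (2 * m - 1 + 2)%nat by lia.
      rewrite !pow_add.
      set (w := sqrt (1 - r²)) in *.
      simpl INR.
      field. lra.
Qed.
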